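(* Let $G'$ be a connected graph and $x,v\in V(G')$ distinct vertices with $N_{G'}[x]\subseteq N_{G'}[v]$. If $T'$ is a search tree on $G'$ in which $v$ is a descendant of $x$, then $x$ has at most one child in $T'$ and $p(T',x)$ is a search tree on $G'-x$.
   Context: $N[\cdot]$ denotes the closed neighbourhood. For a connected graph $G$, a search tree on $G$ is a rooted tree with vertex set $V(G)$ defined recursively: its root is some vertex $r\in V(G)$, and the children of $r$ are the roots of search trees on the connected components of $G-r$. Elimination: for a rooted tree $T$ and a vertex $u$ with at most one child, $p(T,u)$ is the rooted tree obtained as follows: if $u$ is the root with child $c$, delete $u$ and make $c$ the root; if $u$ is not the root, has exactly one child $c$ and parent $b$, delete $u$ and add the edge $bc$ (root unchanged); if $u$ is a leaf, delete $u$ (root unchanged). *)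

(* Defs.v *)
From mathcomp Require Import all_boot.
Set Implicit Arguments. Unset Strict Implicit. Unset Printing Implicit Defensive.

(* A graph G' is represented as the subgraph induced on a vertex set
   S : {set T} of a simple graph (symmetric irreflexive e : rel T) on a
   finite type T.  G' - x is then the subgraph induced on S :\ x. *)

Section Graphs.
Variables (T : finType) (e : rel T).

Definition restr (S : {set T}) : rel T :=
  [rel a b | [&& a \in S, b \in S & e a b]].

Definition connected (S : {set T}) : Prop :=
  S != set0 /\ forall y z, y \in S -> z \in S -> connect (restr S) y z.

Definition comp (S : {set T}) (y : T) : {set T} :=
  [set z in S | connect (restr S) y z].

Definition components (S : {set T}) : {set {set T}} :=
  [set comp S y | y in S].

Definition cnbhd (S : {set T}) (x : T) : {set T} :=
  [set y in S | (y == x) || e x y].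

(* Rooted trees are given by a root r and a parent map par : T -> option T;
   the tree with vertex set S has par y = Some (parent of y) for y in S :\ r.
   [st par S r]: the rooted tree with root r, vertex set S and parent map par
   (restricted to S :\ r) is a search tree on G[S]:  G[S] is connected, r is
   the root, and the children of r are the roots of search trees on the
   components of G[S] - r (one per component). *)
Inductive st (par : T -> option T) : {set T} -> T -> Prop :=
| StNode (S : {set T}) (r : T) :
    r \in S ->
    connected S ->
    (forall y, y \in S :\ r -> exists2 z, par y = Some z & z \in S) ->
    (forall C, C \in components (S :\ r) ->
       exists c, [/\ c \in C, par c = Some r & st par C c]) ->
    st par S r.

Definition search_tree (S : {set T}) (r : T) (par : T -> option T) : Prop :=
  par r = None /\ st par S r.

Fixpoint up (par : T -> option T) (k : nat) (y : T) : option T :=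
  match k with
  | 0 => Some y
  | k'.+1 => obind par (up par k' y)
  end.

Definition descendant (par : T -> option T) (v x : T) : Prop :=
  exists2 k, 0 < k & up par k v = Some x.

Definition children (S : {set T}) (par : T -> option T) (u : T) : {set T} :=
  [set y in S | par y == Some u].

(* p(T,u) for the tree (S, r, par) and a vertex u with at most one child:
   returns (new root, new parent map); the new vertex set is S :\ u.
   - u root with child c: c becomes the root;
   - u non-root with child c and parent b: c gets parent b;
   - u a leaf: just delete u.
   (The root-leaf case, i.e. S = [set u], is left unspecified in the paper.) *)
Definition elim (S : {set T}) (r : T) (par : T -> option T) (u : T)
  : T * (T -> option T) :=
  match [pick y in S | par y == Some u] with
  | Some c =>
      if u == r then (c, fun y => if y == c then None else par y)
      else (r, fun y => if y == c then par u else par y)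
  | None => (r, par)
  end.

End Graphs.

(* Main.v *)
Require Import Defs.
From mathcomp Require Import all_boot.
Set Implicit Arguments. Unset Strict Implicit. Unset Printing Implicit Defensive.

Notation compo := Defs.comp.
Section Proof.
Variables (T : finType) (e : rel T).
Hypothesis e_sym : symmetric e.
Hypothesis e_irr : irreflexive e.
Implicit Types (A B C D S : {set T}) (a b u w y z r x v : T).

Lemma st_ind2 (par : T -> option T) (P : {set T} -> T -> Prop) :
  (forall (S : {set T}) (r : T), r \in S -> connected e S ->
    (forall y, y \in S :\ r -> exists2 z, par y = Some z & z \in S) ->
    (forall C, C \in components e (S :\ r) ->
       exists c, [/\ c \in C, par c = Some r, st e par C c & P C c]) ->
    P S r) ->
  forall S r, st e par S r -> P S r.
Proof.
move=> f; fix IH 3 => S r [] {S r} S r h1 h2 h3 h4.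
apply: f h1 h2 h3 _ => C hC.
case: (h4 C hC) => c [a b d]; exists c; split => //; exact: IH.
Qed.

Lemma stE par S r : st e par S r -> [/\ r \in S, connected e S,
    (forall y, y \in S :\ r -> exists2 z, par y = Some z & z \in S) &
    (forall C, C \in components e (S :\ r) ->
       exists c, [/\ c \in C, par c = Some r & st e par C c])].
Proof. by case. Qed.

Lemma restr_sym A : symmetric (restr e A).
Proof. by move=> a b; rewrite /restr /= e_sym andbCA. Qed.

Lemma comp_sub A y : compo e A y \subset A.
Proof. by apply/subsetP => z; rewrite inE => /andP[]. Qed.

Lemma comp_self A y : y \in A -> y \in compo e A y.
Proof. by move=> yA; rewrite inE yA connect0. Qed.

Lemma comp_eq A y z : z \in compo e A y -> compo e A z = compo e A y.
Proof.
rewrite inE => /andP[zA yz]; apply/setP => u; rewrite !inE.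
case: (u \in A) => //=; apply/idP/idP => h.
- exact: connect_trans yz h.
- by rewrite (sym_connect_sym (restr_sym A)) in yz; exact: connect_trans yz h.
Qed.

Lemma connect_mono A B a b : A \subset B ->
  connect (restr e A) a b -> connect (restr e B) a b.
Proof.
move=> AB; apply: connect_sub => u w /= /and3P[uA wA euw].
by apply: connect1; rewrite /restr /= (subsetP AB _ uA) (subsetP AB _ wA).
Qed.

Lemma in_components A C : C \in components e A ->
  exists2 y, y \in A & C = compo e A y.
Proof. by case/imsetP => y yA ->; exists y. Qed.

Lemma comp_in_components A y : y \in A -> compo e A y \in components e A.
Proof. by move=> yA; apply: imset_f. Qed.

Lemma components_sub A C : C \in components e A -> C \subset A.
Proof. by case/in_components => y _ ->; apply: comp_sub. Qed.

Lemma par_comp par D w y z : st e par D w -> y \in D :\ w -> par y = Some z ->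
  z != w -> z \in compo e (D :\ w) y.
Proof.
case/stE => _ _ _ hc yDw pyz zw.
have [c [cC pc /stE[_ _ parC _]]] := hc _ (comp_in_components yDw).
case: (eqVneq y c) => [yc|ync].
  by move: pyz; rewrite yc pc => -[] zE; rewrite zE eqxx in zw.
have [z' pz' z'C] := parC y ltac:(by rewrite in_setD1 ync (comp_self yDw)).
by move: pyz; rewrite pz' => -[<-].
Qed.

Lemma no_self par D w : st e par D w -> forall y, y \in D :\ w -> par y != Some y.
Proof.
apply: (@st_ind2 par (fun D w => forall y, y \in D :\ w -> par y != Some y)).
move=> S r _ _ _ hc y ySr.
have [c [cC pc _ IH]] := hc _ (comp_in_components ySr).
case: (eqVneq y c) => [yc|ync].
  rewrite yc pc; apply/eqP => -[rc]; move: ySr; rewrite yc rc !inE eqxx //.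
by apply: IH; rewrite in_setD1 ync (comp_self ySr).
Qed.

Lemma st_cong par D w : st e par D w -> forall par',
  (forall y, y \in D :\ w -> par' y = par y) -> st e par' D w.
Proof.
apply: (@st_ind2 par (fun D w => forall par',
  (forall y, y \in D :\ w -> par' y = par y) -> st e par' D w)).
move=> S r rS cS parS hc par' agr; constructor => //.
  by move=> y ySr; rewrite agr //; apply: parS.
move=> C hC; have [c [cC pc stC IH]] := hc _ hC.
have CS := components_sub hC.
exists c; split => //; first by rewrite agr // (subsetP CS).
apply: IH => y; rewrite inE => /andP[_ yC]; apply: agr; exact: (subsetP CS).
Qed.

Lemma cnbhd_restr A B x v : B \subset A ->
  cnbhd e A x \subset cnbhd e A v -> cnbhd e B x \subset cnbhd e B v.
Proof.
move=> BA /subsetP h; apply/subsetP => y; rewrite !inE => /andP[yB hy].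
have := h y; rewrite !inE (subsetP BA _ yB) hy /= => ->//.
by rewrite yB.
Qed.

Lemma conn_del D x v : connected e D -> x \in D -> v \in D -> x != v ->
  cnbhd e D x \subset cnbhd e D v ->
  forall y z, y \in D :\ x -> z \in D :\ x -> connect (restr e (D :\ x)) y z.
Proof.
move=> [_ cD] xD vD xv /subsetP hN.
pose f y := if y == x then v else y.
have vDx : v \in D :\ x by rewrite !inE eq_sym xv.
have edge : forall a b, restr e D a b -> connect (restr e (D :\ x)) (f a) (f b).
  move=> a b /and3P[aD bD eab]; rewrite /f.
  case: (eqVneq a x) => [ax|ax]; [subst a|]; case: (eqVneq b x) => [bx|bx].
  - by move: eab; rewrite bx e_irr.
  - have := hN b; rewrite !inE bD eab orbT => /(_ isT) /andP[_].
    case/orP => [/eqP->|evb]; first exact: connect0.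
    by apply: connect1; rewrite /restr /= vDx !inE bx bD.
  - subst b; have := hN a; rewrite !inE aD e_sym eab orbT => /(_ isT) /andP[_].
    case/orP => [/eqP->|eva]; first exact: connect0.
    by apply: connect1; rewrite /restr /= vDx !inE ax aD e_sym.
  - by apply: connect1; rewrite /restr /= !inE ax bx aD bD.
have pth : forall p y, path (restr e D) y p ->
    connect (restr e (D :\ x)) (f y) (f (last y p)).
  elim=> [|z p IH] y /=; first by move=> _; exact: connect0.
  case/andP=> yz pz; apply: connect_trans (edge _ _ yz) (IH _ pz).
move=> y z; rewrite !inE => /andP[yx yD] /andP[zx zD].
have /connectP[p pp zl] := cD y z yD zD; rewrite zl in zx *.
have := pth p y pp; rewrite /f (negbTE yx).
by rewrite (negbTE zx).
Qed.

Lemma up_none par m n y : up par m y = None -> up par (n + m) y = None.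
Proof. by move=> h; elim: n => [|n IH] //=; rewrite IH. Qed.

Section Main.
Variables (par : T -> option T) (x v c : T).

Lemma main D w : st e par D w ->
  (forall z, par w = Some z -> z \notin D) ->
  x \in D -> v \in D -> x != v -> cnbhd e D x \subset cnbhd e D v ->
  (exists2 k, 0 < k & up par k v = Some x /\
     forall j, j <= k -> exists2 z, up par j v = Some z & z \in D) ->
  c \in D -> par c = Some x ->
  (forall y, y \in D -> par y = Some x -> y = c) /\
  (if x == w then st e par (D :\ x) c
   else st e (fun y => if y == c then par x else par y) (D :\ x) w).
Proof.
move=> stD; have stD2 := stD; move: D w stD stD2.
apply: (@st_ind2 par (fun D w => st e par D w ->
  (forall z, par w = Some z -> z \notin D) ->
  x \in D -> v \in D -> x != v -> cnbhd e D x \subset cnbhd e D v ->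
  (exists2 k, 0 < k & up par k v = Some x /\
     forall j, j <= k -> exists2 z, up par j v = Some z & z \in D) ->
  c \in D -> par c = Some x ->
  (forall y, y \in D -> par y = Some x -> y = c) /\
  (if x == w then st e par (D :\ x) c
   else st e (fun y => if y == c then par x else par y) (D :\ x) w))).
move=> S w wS cS parS compS stS inv xS vS xv hN [k k0 [upk chk]] cSS pc.
have Conn := conn_del cS xS vS xv hN.
case: (eqVneq x w) => [xw|xw].
  subst w.
  have vSx : v \in S :\ x by rewrite !inE eq_sym xv.
  have [cv [cvC pcv stCv _]] := compS _ (comp_in_components vSx).
  have CvE : compo e (S :\ x) v = S :\ x.
    apply/setP => z; rewrite inE; case zS: (z \in S :\ x) => //=.
    exact: Conn.
  have one : forall y, y \in S -> par y = Some x -> y = cv.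
    move=> y yS py; case: (eqVneq y x) => [yx|yx].
      by have := inv x; rewrite -{1}yx py xS => /(_ erefl).
    case: (eqVneq y cv) => // ycv.
    case/stE: stCv => _ _ parC _.
    have [z pz zC] := parC y ltac:(by rewrite in_setD1 ycv CvE !inE yx yS).
    move: pz; rewrite py => -[zx]; move: zC; rewrite -zx CvE !inE eqxx //.
  split.
    by move=> y yS py; rewrite (one y) // (one c).
  by rewrite (one c) // -CvE.
have xSw : x \in S :\ w by rewrite !inE xw xS.
have [cx [cxC pcx stCx IHx]] := compS _ (comp_in_components xSw).
set Cx := compo e (S :\ w) x in cxC stCx IHx.
have CxS : Cx \subset S :\ w by apply: comp_sub.
have vw : v != w.
  apply/eqP => vw; have [z uz zS] := chk 1 k0.
  by move: uz; rewrite /= vw => /inv; rewrite zS.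
have vSw : v \in S :\ w by rewrite !inE vw vS.
have chC : forall j, j <= k -> exists2 z, up par j v = Some z & z \in compo e (S :\ w) v.
  elim=> [|j IH] jk; first by exists v => //; apply: comp_self.
  have [z uz zC] := IH (ltnW jk).
  have [z' uz' z'S] := chk _ jk.
  have pz : par z = Some z' by move: uz'; rewrite /= uz.
  have z'w : z' != w.
    apply/eqP => z'w; case: (eqVneq j.+1 k) => [jk'|jk'].
      by move: upk; rewrite -jk' uz' z'w => -[] wx; rewrite wx eqxx in xw.
    have jk2 : j.+2 <= k by rewrite ltn_neqAle jk' jk.
    have [z'' uz'' z''S] := chk _ jk2.
    by move: uz''; rewrite /= uz /= pz /= z'w => /inv; rewrite z''S.
  exists z' => //.
  have zSw := subsetP (comp_sub _ _) _ zC.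
  by rewrite -(comp_eq zC); apply: par_comp stS zSw pz z'w.
have vCx : compo e (S :\ w) v = Cx.
  have [z uz zC] := chC k (leqnn k); move: uz; rewrite upk => -[zx]; rewrite -zx in zC.
  by rewrite /Cx (comp_eq zC).
have inCx : forall y, y \in S -> par y = Some x -> y \in Cx.
  move=> y yS py.
  have yw : y != w by apply/eqP => yw; move: (inv x); rewrite -yw py xS => /(_ erefl).
  have ySw : y \in S :\ w by rewrite !inE yw yS.
  have := par_comp stS ySw py xw => /comp_eq; rewrite /Cx => ->.
  exact: comp_self.
have cCx := inCx c cSS pc.
have vCxm : v \in Cx by rewrite -vCx; apply: comp_self.
have chCx : forall j, j <= k -> exists2 z, up par j v = Some z & z \in Cx.
  by rewrite -vCx.
have invx : forall z, par cx = Some z -> z \notin Cx.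
  by move=> z; rewrite pcx => -[<-]; apply/negP => /(subsetP CxS); rewrite !inE eqxx.
have [one' st'] := IHx stCx invx
  (comp_self xSw) vCxm xv
  (cnbhd_restr (subset_trans CxS (subsetDl _ _)) hN)
  (ex_intro2 _ _ k k0 (conj upk chCx)) cCx pc.
split; first by move=> y yS py; apply: one' => //; apply: inCx.
have noself := no_self stS.
constructor.
- by rewrite !inE eq_sym xw wS.
- split; first by apply/set0Pn; exists v; rewrite !inE eq_sym xv.
  exact: Conn.
- move=> y; rewrite !inE => /and3P[yw yx yS].
  case: (eqVneq y c) => [yc|yc].
    have [z pz zS] := parS x xSw.
    exists z => //; rewrite !inE zS andbT; apply/eqP => zx.
    by move: (noself x xSw); rewrite pz zx eqxx.
  have [z pz zS] := parS y ltac:(by rewrite !inE yw yS).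
  exists z => //; rewrite !inE zS andbT; apply/eqP => zx.
  by move: yc; rewrite (one' y) ?eqxx // ?(inCx y yS) // pz zx.
move=> C /in_components [y]; rewrite !inE => /and3P[yw yx yS] ->.
have ySw : y \in S :\ w by rewrite !inE yw yS.
have SxwS : (S :\ x) :\ w \subset S :\ w by apply: setSD; apply: subsetDl.
case yCx : (y \in Cx).
  have CE : compo e ((S :\ x) :\ w) y = Cx :\ x.
    apply/setP => z; apply/idP/idP.
      rewrite inE => /andP[zS yz]; have yz' := connect_mono SxwS yz.
      have zC : z \in compo e (S :\ w) y by rewrite inE yz' (subsetP SxwS _ zS).
      have zx : z != x by move: zS; rewrite !inE => /and3P[]. 
      rewrite in_setD1 zx /=.
      by move: zC; rewrite /Cx (comp_eq yCx).
    move=> zCx; have zC : z \in Cx by move: zCx; rewrite in_setD1 => /andP[].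
    have zx : z != x by move: zCx; rewrite in_setD1 => /andP[].
    have CxxS : Cx :\ x \subset (S :\ x) :\ w.
      apply/subsetP => u; rewrite in_setD1 => /andP[ux uC].
      by have := subsetP CxS _ uC; rewrite !inE ux => ->.
    rewrite inE; apply/andP; split; first exact: (subsetP CxxS).
    apply: connect_mono CxxS _.
    case/stE: stCx => _ cCx' _ _.
    apply: (conn_del cCx' (comp_self xSw) vCxm xv
      (cnbhd_restr (subset_trans CxS (subsetDl _ _)) hN)) => //.
    by rewrite in_setD1 yx yCx.
  rewrite CE.
  have cx_ne_c : cx != c.
    by apply/eqP => cxc; move: pcx; rewrite cxc pc => -[] /eqP; rewrite (negbTE xw).
  have cx_in : cx \in Cx :\ x -> exists c0, [/\ c0 \in Cx :\ x,
       (fun y => if y == c then par x else par y) c0 = Some w &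
       st e (fun y => if y == c then par x else par y) (Cx :\ x) c0].
    move=> h; exists cx; split => //=; first by rewrite (negbTE cx_ne_c).
    by move: st'; case: ifP => // /eqP xcx; move: h; rewrite xcx in_setD1 eqxx.
  case: (eqVneq x cx) => [xcx|xcx]; last by apply: cx_in; rewrite in_setD1 eq_sym xcx cxC.
  have cx' : c != x.
    by apply/eqP => cx'; move: (noself x xSw); rewrite -{1}cx' pc eqxx.
  move: st'; rewrite -xcx eqxx => st'.
  exists c; split => /=.
  - by rewrite in_setD1 cx' cCx.
  - by rewrite eqxx xcx pcx.
  - apply: (st_cong st') => u; rewrite in_setD1 => /andP[uc _].
    by rewrite (negbTE uc).
have [c' [c'C pc' stC' _]] := compS _ (comp_in_components ySw).
have notx : forall u, u \in compo e (S :\ w) y -> u \in Cx -> False.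
  move=> u uy ux; move: yCx; rewrite /Cx -(comp_eq ux) (comp_eq uy).
  by rewrite comp_self.
have CE : compo e ((S :\ x) :\ w) y = compo e (S :\ w) y.
  apply/setP => z; rewrite inE; apply/andP/idP.
    case=> zS yz; rewrite inE (subsetP SxwS _ zS).
    exact: connect_mono SxwS yz.
  move=> zC.
  have C'S : compo e (S :\ w) y \subset (S :\ x) :\ w.
    apply/subsetP => u uC; have := subsetP (comp_sub _ _) _ uC.
    rewrite !inE => /andP[-> ->]; rewrite andbT /=.
    by apply/eqP => ux; apply: (notx u uC); rewrite ux comp_self.
  split; first exact: (subsetP C'S).
  apply: connect_mono C'S _.
  by case/stE: stC' => _ [_ cC'] _ _; apply: cC' => //; apply: comp_self.
rewrite CE; exists c'; split => //=.
  by rewrite ifN // ; apply/eqP => c'c; apply: (notx c) => //; rewrite -c'c.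
apply: (st_cong stC') => u; rewrite inE => /andP[_ uC].
by rewrite ifN //; apply/eqP => uc; apply: (notx c) => //; rewrite -uc.
Qed.

End Main.
End Proof.

Theorem lemma2p1 (T : finType) (e : rel T)
  (e_sym : symmetric e) (e_irr : irreflexive e)
  (S : {set T}) (x v : T) (r : T) (par : T -> option T) :
  connected e S ->
  x \in S -> v \in S -> x != v ->
  cnbhd e S x \subset cnbhd e S v ->
  search_tree e S r par ->
  descendant par v x ->
  #|children S par x| <= 1 /\
  search_tree e (S :\ x) (elim S r par x).1 (elim S r par x).2.
Proof.
move=> cS xS vS xv hN [pr stS] [k k0 upk].
have [_ _ parS _] := stE stS.
have chS : forall j, j <= k -> exists2 z, up par j v = Some z & z \in S.
  elim=> [|j IH] jk; first by exists v.
  have [z uz zS] := IH (ltnW jk).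
  rewrite /= uz /=.
  case hp: (par z) => [z'|].
    case: (eqVneq z r) => [zr|zr]; first by move: hp; rewrite zr pr.
    have [z'' pz z''S] := parS z ltac:(by rewrite !inE zr zS).
    by exists z'; move: pz; rewrite hp => -[->].
  have : up par j.+1 v = None by rewrite /= uz.
  move/(up_none (k - j.+1)); rewrite subnK // upk //.
case: k k0 upk chS => // k _ upk chS.
have [y uy yS] := chS k (leqnSn k).
have py : par y = Some x by move: upk; rewrite /= uy.
rewrite /elim; case: pickP => [c /andP[cSS /eqP pc] | none]; last first.
  by have := none y; rewrite yS py eqxx.
have [one st'] := main e_sym e_irr stS
  ltac:(by move=> z; rewrite pr) xS vS xv hN
  (ex_intro2 _ _ k.+1 (ltn0Sn k) (conj upk chS)) cSS pc.
split.
  rewrite -(cards1 c); apply: subset_leq_card; apply/subsetP => u.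
  by rewrite !inE => /andP[uS /eqP pu]; rewrite (one u uS pu).
case: (eqVneq x r) => [xr|xr] /=.
  move: st'; rewrite xr eqxx => st'; split; first by rewrite eqxx.
  apply: (st_cong st') => u; rewrite in_setD1 => /andP[uc _].
  by rewrite (negbTE uc).
move: st'; rewrite (negbTE xr) => st'; split => //.
by rewrite ifN // ; apply/eqP => rc; move: pc; rewrite -rc pr.
Qed.
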